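(* Let $G$ be a hybrid graph. If the density matrix $\rho(G)$ is separable and the partial transpose graph $G^\Gamma$ is a NOI-graph or a COI-graph, then $D(G)=D(G^\Gamma)$.
   Context: A hybrid graph $G=(V,E_L+E_Q)$ is a grid-labelled graph (vertices $(i,j)$ on a grid, vertex $(i,j)$ identified with $|ij\rangle\in\mathbb{C}^{m_1}\otimes\mathbb{C}^{m_2}$) with a set $E_L$ of $L$-edges and a set $E_Q$ of $Q$-edges; an $L$-edge $\{(i,j),(k,l)\}$ has state $\frac1{\sqrt2}(|ij\rangle-|kl\rangle)$, a $Q$-edge has state $\frac1{\sqrt2}(|ij\rangle+|kl\rangle)$. Its hybrid Laplacian is $\mathcal{L}(G)=L(S_l)+Q(S_q)$, where $S_l=(V,E_L)$, $S_q=(V,E_Q)$, $L=D-A$ is the signed and $Q=D+A$ the signless Laplacian; $\rho(G)$ is the normalized $\mathcal{L}(G)$, i.e. the equal mixture of all edge-state projectors. $D(G)$ is the diagonal matrix of vertex degrees counting edges of both types. The partial transpose graph $G^\Gamma$ has the same vertex set and contains the edge $\{(i,l),(k,j)\}$ of a given type iff $G$ contains the edge $\{(i,j),(k,l)\}$ of that type. $G$ is a NOI-graph if its $Q$-subgraph $S_q$ is bipartite and no vertex is incident to both a $Q$-edge and an $L$-edge. $G$ is a COI-graph if $S_q$ is bipartite with a bipartition $(P_1,P_2)$ of $V$ (every $Q$-edge joining $P_1$ to $P_2$) such that every $L$-edge joins two vertices in the same part. *)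

(* Defs.v *)
From HB Require Import structures.
From mathcomp Require Import all_boot all_order all_algebra all_field.
Set Implicit Arguments. Unset Strict Implicit. Unset Printing Implicit Defensive.
Import Order.TTheory GRing.Theory Num.Theory.
Local Open Scope ring_scope.

(* Grid vertex set: vertex (i,j) <-> |ij> in C^m1 (x) C^m2. *)
Definition vert (m1 m2 : nat) := ('I_m1 * 'I_m2)%type.

(* A hybrid graph is given by two edge relations eL (L-edges) and eQ
   (Q-edges) on the grid vertices; each must be symmetric and loopless
   (edges are unordered pairs of distinct vertices). *)
Definition simple_rel (T : finType) (e : rel T) : Prop :=
  (forall x y, e x y = e y x) /\ (forall x, e x x = false).

Definition hybrid_graph m1 m2 (eL eQ : rel (vert m1 m2)) : Prop :=
  simple_rel eL /\ simple_rel eQ.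

Definition deg (T : finType) (e : rel T) (u : T) : nat := #|[set v | e u v]|.

(* D(G): degree counting edges of both types (diagonal entries of D(G)) *)
Definition Ddeg m1 m2 (eL eQ : rel (vert m1 m2)) (u : vert m1 m2) : nat :=
  deg eL u + deg eQ u.

(* hybrid Laplacian  L(S_l) + Q(S_q) = D(G) - A(S_l) + A(S_q) *)
Definition hlap m1 m2 (eL eQ : rel (vert m1 m2)) (u v : vert m1 m2) : algC :=
  if u == v then (Ddeg eL eQ u)%:R
  else - (eL u v : nat)%:R + (eQ u v : nat)%:R.

Definition trace_fun (T : finType) (A : T -> T -> algC) : algC := \sum_u A u u.

(* rho(G): the normalized hybrid Laplacian (= equal mixture of the edge
   projectors). *)
Definition rhoG m1 m2 (eL eQ : rel (vert m1 m2)) (u v : vert m1 m2) : algC :=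
  (trace_fun (hlap eL eQ))^-1 * hlap eL eQ u v.

Definition psd n (A : 'M[algC]_n) : Prop :=
  forall x : 'cV[algC]_n, 0 <= ((map_mx Num.conj x)^T *m A *m x) 0 0.

Definition density n (A : 'M[algC]_n) : Prop := psd A /\ \tr A = 1.

Definition separable_state m1 m2 (rho : vert m1 m2 -> vert m1 m2 -> algC) : Prop :=
  exists (k : nat) (p : 'I_k -> algC) (rA : 'I_k -> 'M[algC]_m1)
         (rB : 'I_k -> 'M[algC]_m2),
    (forall i, 0 <= p i) /\ \sum_i p i = 1 /\
    (forall i, density (rA i) /\ density (rB i)) /\
    forall u v : vert m1 m2,
      rho u v = \sum_i p i * (rA i u.1 v.1 * rB i u.2 v.2).

Definition ptrans m1 m2 (e : rel (vert m1 m2)) : rel (vert m1 m2) :=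
  fun x y => e (x.1, y.2) (y.1, x.2).

Definition bipartite_by (T : finType) (f : T -> bool) (e : rel T) : Prop :=
  forall x y, e x y -> f x != f y.

Definition NOI m1 m2 (eL eQ : rel (vert m1 m2)) : Prop :=
  (exists f, bipartite_by f eQ) /\
  ~ exists u v w, eQ u v && eL u w.

Definition COI m1 m2 (eL eQ : rel (vert m1 m2)) : Prop :=
  exists f : vert m1 m2 -> bool,
    bipartite_by f eQ /\ forall x y, eL x y -> f x = f y.

(* Main.v *)
Require Import Defs.
From HB Require Import structures.
From mathcomp Require Import all_boot all_order all_algebra all_field.
From mathcomp Require Import ring lra zify.
Set Implicit Arguments. Unset Strict Implicit. Unset Printing Implicit Defensive.
Import Order.TTheory GRing.Theory Num.Theory.
Local Open Scope ring_scope.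


Lemma psd_sum n (A : 'M[algC]_n) : psd A ->
  forall z : 'I_n -> algC, 0 <= \sum_a \sum_c (z a)^* * A a c * z c.
Proof.
move=> H z; have := H (\col_i z i); rewrite !mxE.
under eq_bigr => c _ do rewrite !mxE big_distrl /=.
rewrite exchange_big /=.
congr (_ <= _); apply: eq_bigr => a _; apply: eq_bigr => c _.
by rewrite !mxE.
Qed.

Definition ev n (i : 'I_n) (u : 'I_n) : algC := (u == i)%:R.

Lemma sum_ev n (F : 'I_n -> algC) j : \sum_c F c * ev j c = F j.
Proof.
under eq_bigr => c _ do rewrite /ev mulr_natr mulrb.
by rewrite -big_mkcond big_pred1_eq.
Qed.

Lemma sum_ev2 n (F : 'I_n -> algC) i j a b :
  \sum_c F c * (a * ev i c + b * ev j c) = a * F i + b * F j.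
Proof.
under eq_bigr => c _ do rewrite mulrDr !mulrA ![F c * _]mulrC -!mulrA.
by rewrite big_split /= -!big_distrr /= !sum_ev.
Qed.

Lemma quad2 n (A : 'M[algC]_n) i j a b :
  \sum_u \sum_c (a * ev i u + b * ev j u)^* * A u c * (a * ev i c + b * ev j c)
  = a^* * (a * A i i + b * A i j) + b^* * (a * A j i + b * A j j).
Proof.
have E : forall u, \sum_c (a * ev i u + b * ev j u)^* * A u c * (a * ev i c + b * ev j c)
   = (a * A u i + b * A u j) * (a^* * ev i u + b^* * ev j u).
  move=> u; under eq_bigr => c _ do rewrite -mulrA.
  rewrite -big_distrr /= sum_ev2 mulrC rmorphD !rmorphM /= /ev !rmorph_nat //.
under eq_bigr => u _ do rewrite E.
by rewrite sum_ev2.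
Qed.

Lemma herm_alg (a x y d I : algC) : I^* = -I -> -1 = I ^+ 2 -> a^*=a -> d^*=d ->
  (a + x + (y + d))^* = a + x + (y+d) ->
  (a + I*x + -I*(y + I*d))^* = a + I*x + -I*(y+I*d) -> y = x^*.
Proof.
move=> cI sI ca cd e1 e2.
rewrite !(rmorphD, rmorphM, rmorphN) /= in e1 e2.
rewrite !cI !ca !cd in e1 e2.
have k : (x^* - y) *+ 2 = ((x^* + (y^* + d) - (x + (y + d))) + I * (a + - I * x^* + - - I * (y^* + - I * d) - (a + I * x + - I * (y + I * d))))
   + (I ^+ 2 + 1) * (x^* - y^* + x - y) by ring.
move: k; rewrite -sI addNr mul0r addr0.
rewrite (_ : x^* + (y^* + d) = x + (y + d)); last by apply: (addrI a); rewrite !addrA; rewrite !addrA in e1.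
rewrite e2 !subrr mulr0 addr0 => /eqP; rewrite mulrn_eq0 /= subr_eq0 => /eqP.
by [].
Qed.

Lemma psd_herm n (A : 'M[algC]_n) : psd A -> forall i j, A j i = (A i j)^*.
Proof.
move=> H i j.
have Q := fun a b => psd_sum H (fun u => a * ev i u + b * ev j u).
have Hii : 0 <= A i i by have := Q 1 0; rewrite quad2 !rmorph1 !rmorph0 !(mul0r, mulr0, mul1r, addr0).
have Hjj : 0 <= A j j by have := Q 0 1; rewrite quad2 !rmorph1 !rmorph0 !(mul0r, mulr0, mul1r, add0r).
have [->|nij] := eqVneq i j; first by rewrite geC0_conj.
have h1 : 0 <= A i i + 1 * A i j + 1 * (1 * A j i + 1 * A j j).
  by have := Q 1 1; rewrite quad2 rmorph1 !mul1r.
have h2 : 0 <= A i i + 'i * A i j + (- 'i) * (1 * A j i + 'i * A j j).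
  by have := Q 1 'i; rewrite quad2 rmorph1 conjCi !mul1r.
rewrite !mul1r in h1 h2.
exact: (herm_alg (conjCi _) (esym (sqrCi _)) (geC0_conj Hii) (geC0_conj Hjj) (geC0_conj h1) (geC0_conj h2)).
Qed.




Lemma psd_decomp n (B : 'M[algC]_n) : psd B ->
  exists (P : 'M[algC]_n) (d : 'I_n -> algC), (forall k, 0 <= d k) /\
    (forall a c, B a c = \sum_k (P k a)^* * d k * P k c).
Proof.
move=> H.
have Bh : B \is hermsymmx.
  rewrite is_hermitianmxE expr0 scale1r; apply/eqP/matrixP => i j.
  by rewrite !mxE psd_herm.
have /orthomx_spectralP Be := hermitian_normalmx Bh.
have Pu := spectral_unitarymx B.
rewrite invmx_unitary // in Be.
set P := spectralmx B in Be Pu *; set D := spectral_diag B in Be *.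
have Ee : forall a c, B a c = \sum_k (P k a)^* * D 0 k * P k c.
  move=> a c; rewrite Be mul_mx_diag !mxE; apply: eq_bigr => k _; by rewrite !mxE.
exists P, (fun k => D 0 k); split => //.
move=> k.
have /unitarymxP PP := Pu.
have : (P *m B *m P^t* )%sesqui = diag_mx D.
  by rewrite Be !mulmxA PP mul1mx -mulmxA PP mulmx1.
move=> /matrixP /(_ k k); rewrite !mxE eqxx mulr1n => <-.
have := psd_sum H (fun c => (P k c)^* ).
move=> h; apply: (le_trans h); rewrite le_eqVlt; apply/orP; left; apply/eqP.
rewrite exchange_big; apply: eq_bigr => c _; rewrite !mxE big_distrl /=.
by apply: eq_bigr => a _; rewrite conjCK.
Qed.




Lemma sum_pair (I J : finType) (F : I * J -> algC) :
  \sum_u F u = \sum_a \sum_b F (a, b).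
Proof. by rewrite pair_big; apply: eq_bigr => -[]. Qed.

Lemma psd_tens m1 m2 (A : 'M[algC]_m1) (B : 'M[algC]_m2) : psd A -> psd B ->
  forall x : 'I_m1 * 'I_m2 -> algC,
  0 <= \sum_u \sum_v (x u)^* * x v * (A u.1 v.1 * B v.2 u.2).
Proof.
move=> HA HB x.
have [P [d [hd hB]]] := psd_decomp HB.
pose z k a := \sum_b x (a, b) * (P k b)^*.
have -> : \sum_u \sum_v (x u)^* * x v * (A u.1 v.1 * B v.2 u.2) =
   \sum_k d k * \sum_a \sum_c (z k a)^* * A a c * z k c.
  pose T k a b c e := (x (a,b))^* * x (c,e) * (A a c * ((P k e)^* * d k * P k b)).
  transitivity (\sum_a \sum_b \sum_c \sum_e \sum_k T k a b c e).
    rewrite sum_pair; apply: eq_bigr => a _; apply: eq_bigr => b _.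
    rewrite sum_pair; apply: eq_bigr => c _; apply: eq_bigr => e _.
    by rewrite /= hB !big_distrr.
  symmetry.
  transitivity (\sum_k \sum_a \sum_c \sum_b \sum_e T k a b c e).
    apply: eq_bigr => k _; rewrite mulr_sumr; apply: eq_bigr => a _.
    rewrite mulr_sumr; apply: eq_bigr => c _.
    rewrite /z rmorph_sum /= !mulr_suml mulr_sumr; apply: eq_bigr => b _.
    rewrite !mulr_sumr; apply: eq_bigr => e _.
    rewrite /T !rmorphM /= conjCK. ring.
  rewrite [LHS]exchange_big; apply: eq_bigr => a _.
  rewrite [RHS]exchange_big [LHS]exchange_big; apply: eq_bigr => c _.
  rewrite [LHS]exchange_big; apply: eq_bigr => b _.
  by rewrite [LHS]exchange_big.
by apply: sumr_ge0 => k _; apply: mulr_ge0 => //; exact: psd_sum.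
Qed.




Lemma sep_ptrans m1 m2 (rho : vert m1 m2 -> vert m1 m2 -> algC) :
  separable_state rho -> forall x : vert m1 m2 -> algC,
  0 <= \sum_u \sum_v (x u)^* * x v * rho (u.1, v.2) (v.1, u.2).
Proof.
move=> [k [p [rA [rB [hp [hs [hd he]]]]]]] x.
have -> : \sum_u \sum_v (x u)^* * x v * rho (u.1, v.2) (v.1, u.2) =
  \sum_i p i * \sum_u \sum_v (x u)^* * x v * (rA i u.1 v.1 * rB i v.2 u.2).
  transitivity (\sum_u \sum_v \sum_i p i * ((x u)^* * x v * (rA i u.1 v.1 * rB i v.2 u.2))).
    apply: eq_bigr => u _; apply: eq_bigr => v _; rewrite he /= mulr_sumr.
    by apply: eq_bigr => i _; ring.
  under eq_bigr => u _ do rewrite exchange_big.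
  rewrite exchange_big; apply: eq_bigr => i _ /=; rewrite mulr_sumr.
  by apply: eq_bigr => u _ /=; rewrite mulr_sumr.
apply: sumr_ge0 => i _; apply: mulr_ge0 => //.
by apply: psd_tens; [exact: (hd i).1.1 | exact: (hd i).2.1].
Qed.

Lemma deg_sum (T : finType) (e : rel T) u : deg e u = (\sum_v (e u v : nat))%N.
Proof.
rewrite /deg -sum1_card big_mkcond /=; apply: eq_bigr => v _.
by rewrite inE; case: (e u v).
Qed.

Definition phi m1 m2 (p : vert m1 m2 * vert m1 m2) : vert m1 m2 * vert m1 m2 :=
  ((p.1.1, p.2.2), (p.2.1, p.1.2)).

Lemma phiK m1 m2 : involutive (@phi m1 m2).
Proof. by move=> [[a b] [c d]]. Qed.

Lemma hand m1 m2 (e : rel (vert m1 m2)) :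
  (\sum_u deg e u = \sum_u deg (ptrans e) u)%N.
Proof.
under eq_bigr do rewrite deg_sum.
under [RHS]eq_bigr do rewrite deg_sum.
rewrite !pair_big /= [LHS](reindex_inj (inv_inj (@phiK m1 m2))) /=.
by [].
Qed.



Definition evT (T : finType) (j u : T) : algC := (u == j)%:R.

Lemma sum_evT (T : finType) (F : T -> algC) j : \sum_c F c * evT j c = F j.
Proof.
under eq_bigr => c _ do rewrite /evT mulr_natr mulrb.
by rewrite -big_mkcond big_pred1_eq.
Qed.

Lemma sum_lin (T : finType) (F G : T -> algC) a b j :
  \sum_v F v * (a * G v + b * evT j v) = a * (\sum_v F v * G v) + b * F j.
Proof.
under eq_bigr => v _ do rewrite mulrDr.
rewrite big_split /= mulr_sumr -sum_evT mulr_sumr.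
congr (_ + _); apply: eq_bigr => v _; ring.
Qed.

Lemma quad_key (T : finType) (h : T -> T -> algC) (D s : T -> algC) u0 l t :
  (forall u v, h u v = h v u) -> (forall u, \sum_v h u v * s v = 0) ->
  (forall u, s u * s u = 1) -> \sum_u D u = 0 ->
  \sum_u \sum_v (l * s u + t * evT u0 u) * (l * s v + t * evT u0 v) * (h u v + evT u v * D u)
   = 2 * l * t * s u0 * D u0 + t ^+ 2 * (h u0 u0 + D u0).
Proof.
move=> hsym hs hss hD.
set X := fun u => l * s u + t * evT u0 u.
have E1 : forall u, \sum_v X u * X v * (h u v + evT u v * D u) =
    X u * (t * h u u0) + X u * X u * D u.
  move=> u; under eq_bigr => v _ do rewrite mulrDr; rewrite big_split /=.
  congr (_ + _).
    transitivity (X u * \sum_v h u v * (l * s v + t * evT u0 v)).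
      by rewrite mulr_sumr; apply: eq_bigr => v _; rewrite /X; ring.
    by rewrite sum_lin hs mulr0 add0r.
  rewrite -(sum_evT (fun v => X u * X v * D u)).
  by apply: eq_bigr => v _; ring.
under eq_bigr => u _ do rewrite E1.
rewrite big_split /=.
have -> : \sum_u X u * (t * h u u0) = t ^+ 2 * h u0 u0.
  transitivity (\sum_u (t * h u0 u) * (l * s u + t * evT u0 u)).
    by apply: eq_bigr => u _; rewrite hsym mulrC.
  rewrite sum_lin.
  rewrite (_ : \sum_v t * h u0 v * s v = 0) ?mulr0 ?add0r; first by ring.
  by under eq_bigr do rewrite -mulrA; rewrite -mulr_sumr hs mulr0.
have -> : \sum_u X u * X u * D u = \sum_u (l ^+ 2 * D u + (2 * l * t * s u * D u + t ^+ 2 * D u) * evT u0 u).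
  apply: eq_bigr => u _; rewrite /X /evT; case: (u == u0) => /=.
    transitivity (l ^+ 2 * (s u * s u) * D u + (2 * l * t * s u * D u + t ^+ 2 * D u)); first by ring.
    by rewrite hss; ring.
  transitivity (l ^+ 2 * (s u * s u) * D u); first by ring.
  by rewrite hss; ring.
rewrite big_split /= -mulr_sumr hD mulr0 add0r sum_evT.
ring.
Qed.



Lemma final_step (n1 n2 : nat) (s0 : algC) : s0 * s0 = 1 ->
  0 <= 2 * (n1%:R + 1) * (- (s0 * (n1%:R - n2%:R))) * s0 * (n1%:R - n2%:R)
       + (- (s0 * (n1%:R - n2%:R))) ^+ 2 * (n2%:R + (n1%:R - n2%:R)) -> n1 = n2.
Proof.
move=> hs.
have -> : 2 * (n1%:R + 1) * (- (s0 * (n1%:R - n2%:R))) * s0 * (n1%:R - n2%:R)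
       + (- (s0 * (n1%:R - n2%:R))) ^+ 2 * (n2%:R + (n1%:R - n2%:R)) =
   ((- (n1%:Z + 2) * (n1%:Z - n2%:Z) ^+ 2)%:~R : algC).
  transitivity (- (n1%:R + 2) * (s0 * s0) * (n1%:R - n2%:R) ^+ 2 : algC); first by ring.
  rewrite hs rmorphM rmorphN rmorphD rmorphXn rmorphB /=; ring.
move=> h; have h2 : (0 <= (- (n1%:Z + 2) * (n1%:Z - n2%:Z) ^+ 2))%R by rewrite -(ler0z algC).
move: h2; rewrite mulNr oppr_ge0 pmulr_rle0; last by lia.
move=> h3; have : (n1%:Z - n2%:Z) ^+ 2 = 0 by apply/eqP; rewrite eq_le h3 sqr_ge0.
move/eqP; rewrite expf_eq0 /= subr_eq0 => /eqP; lia.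
Qed.




Lemma ptrans_simple m1 m2 (e : rel (vert m1 m2)) : simple_rel e -> simple_rel (ptrans e).
Proof.
move=> [hs hl]; split.
  by move=> x y; rewrite /ptrans hs.
by move=> [a b]; rewrite /ptrans /= hl.
Qed.

Lemma get_g m1 m2 (L Q : rel (vert m1 m2)) : simple_rel L -> simple_rel Q ->
  NOI L Q \/ COI L Q ->
  exists g : vert m1 m2 -> bool, bipartite_by g Q /\ forall x y, L x y -> g x = g y.
Proof.
move=> [sL _] [sQ _] [[[f hf] hno]|[g [hg hl]]]; last by exists g.
exists (fun u => [exists w, L u w] || f u); split.
  move=> x y hq.
  have nx : ~~ [exists w, L x w].
    apply/negP => /existsP [w hw]; apply: hno; exists x, y, w; by rewrite hq hw.
  have ny : ~~ [exists w, L y w].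
    apply/negP => /existsP [w hw]; apply: hno; exists y, x, w; by rewrite sQ hq hw.
  by rewrite (negbTE nx) (negbTE ny) /=; apply: hf.
move=> x y hxy.
have -> : [exists w, L x w] by apply/existsP; exists y.
have -> // : [exists w, L y w] by apply/existsP; exists x; rewrite sL.
Qed.

Definition sgn (T : finType) (g : T -> bool) (u : T) : algC := if g u then 1 else -1.

Lemma hs_lem m1 m2 (L Q : rel (vert m1 m2)) (g : vert m1 m2 -> bool) :
  simple_rel L -> simple_rel Q ->
  bipartite_by g Q -> (forall x y, L x y -> g x = g y) ->
  forall u, \sum_v hlap L Q u v * sgn g v = 0.
Proof.
move=> [sL lL] [sQ lQ] hQ hL u.
have E : forall v, hlap L Q u v * sgn g v =
   ((Ddeg L Q u)%:R * sgn g u) * evT u v - sgn g u * ((L u v : nat)%:R + (Q u v : nat)%:R).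
  move=> v; rewrite /hlap /evT eq_sym.
  have [<-|nuv] := eqVneq v u.
    by rewrite lL lQ /=; ring.
  have := hL u v; have := hQ u v; rewrite /sgn.
  case: (L u v); case: (Q u v); case: (g u); case: (g v) => //= H1 H2;
   try (by have := H1 erefl); try (by have := H2 erefl); ring.
under eq_bigr do rewrite E.
rewrite sumrB sum_evT -mulr_sumr big_split /= -!natr_sum -!deg_sum /Ddeg natrD.
ring.
Qed.


Lemma hsym_lem m1 m2 (L Q : rel (vert m1 m2)) : simple_rel L -> simple_rel Q ->
  forall u v, hlap L Q u v = hlap L Q v u.
Proof.
move=> [sL _] [sQ _] u v; rewrite /hlap eq_sym.
by have [->|_] := eqVneq v u; last rewrite sL [Q u v]sQ.
Qed.

Lemma hpt_lem m1 m2 (eL eQ : rel (vert m1 m2)) u v :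
  hlap eL eQ (u.1, v.2) (v.1, u.2) = hlap (ptrans eL) (ptrans eQ) u v +
    evT u v * ((Ddeg eL eQ u)%:R - (Ddeg (ptrans eL) (ptrans eQ) u)%:R).
Proof.
have [<-|nuv] := eqVneq u v.
  by rewrite -surjective_pairing /hlap /evT !eqxx -[true%:R]/(1 : algC) mul1r addrC subrK.
have ne : (u.1, v.2) != (v.1, u.2).
  apply: contra nuv => /eqP [h1 h2]; apply/eqP.
  by case: u v h1 h2 => [a b] [c d] /= -> ->.
by rewrite /hlap /evT (negbTE ne) (negbTE nuv) eq_sym (negbTE nuv) mul0r addr0.
Qed.

Lemma trace_lem m1 m2 (L Q : rel (vert m1 m2)) :
  trace_fun (hlap L Q) = (\sum_u Ddeg L Q u)%N%:R.
Proof. by rewrite /trace_fun natr_sum; apply: eq_bigr => u _; rewrite /hlap eqxx. Qed.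

Lemma hand2 m1 m2 (eL eQ : rel (vert m1 m2)) :
  (\sum_u Ddeg eL eQ u = \sum_u Ddeg (ptrans eL) (ptrans eQ) u)%N.
Proof. by rewrite /Ddeg !big_split /= hand [X in (_ + X)%N]hand. Qed.



Theorem theorem3 (m1 m2 : nat) (eL eQ : rel (vert m1 m2)) :
  hybrid_graph eL eQ ->
  separable_state (rhoG eL eQ) ->
  (NOI (ptrans eL) (ptrans eQ) \/ COI (ptrans eL) (ptrans eQ)) ->
  forall u : vert m1 m2, Ddeg eL eQ u = Ddeg (ptrans eL) (ptrans eQ) u.
Proof.
move=> [hL hQ] Hsep Hnc u0.
have hL' := ptrans_simple hL; have hQ' := ptrans_simple hQ.
have [g [hg hgl]] := get_g hL' hQ' Hnc.
have HH := hand2 eL eQ.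
case N0 : (\sum_u Ddeg eL eQ u)%N => [|N].
  have := N0; move/eqP; rewrite sum_nat_eq0 => /forallP /(_ u0) /eqP ->.
  rewrite N0 in HH; move/esym/eqP: HH; rewrite sum_nat_eq0 => /forallP /(_ u0) /eqP ->.
  by [].
set T := trace_fun (hlap eL eQ).
have Tpos : 0 < T by rewrite /T trace_lem N0 ltr0Sn.
pose D u := (Ddeg eL eQ u)%:R - (Ddeg (ptrans eL) (ptrans eQ) u)%:R : algC.
pose s := sgn g.
pose l : algC := (Ddeg eL eQ u0)%:R + 1.
pose t := - (s u0 * D u0).
pose X u := l * s u + t * evT u0 u.
have cs : forall u, (s u)^* = s u by move=> u; rewrite /s /sgn; case: (g u); rewrite ?rmorphN rmorph1.
have cX : forall u, (X u)^* = X u.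
  move=> u; rewrite /X /l /t /D /evT rmorphD !rmorphM rmorphN rmorphM rmorphB rmorphD /= !rmorph_nat rmorph1 !cs.
  by [].
have := sep_ptrans Hsep X.
have -> : (\sum_u \sum_v (X u)^* * X v * rhoG eL eQ (u.1, v.2) (v.1, u.2) =
   T^-1 * \sum_u \sum_v X u * X v * (hlap (ptrans eL) (ptrans eQ) u v + evT u v * D u)).
  rewrite mulr_sumr; apply: eq_bigr => u _; rewrite mulr_sumr; apply: eq_bigr => v _.
  by rewrite cX /rhoG hpt_lem -/T -/(D u) mulrCA.
have hss : forall u, s u * s u = 1 by move=> u; rewrite /s /sgn; case: (g u); rewrite ?mulrNN mulr1.
have hD : \sum_u D u = 0 by rewrite sumrB -!natr_sum HH subrr.
rewrite pmulr_rge0 ?invr_gt0 // quad_key //; last first.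
- exact: hs_lem.
- exact: hsym_lem.
rewrite /hlap eqxx => h.
exact: final_step (hss u0) h.
Qed.
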